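(* Let $a,b,c$ be real numbers with $0<a,b<+\infty$ and $a+b<c<a+b+1$, and let $w\in(0,1)$. Define $$P(a,b,c):=F(a,b,c;1)=\frac{\Gamma(c)\Gamma(c-a-b)}{\Gamma(c-a)\Gamma(c-b)},\qquad Q(a,b,c):=\frac{\Gamma(c)\Gamma(a+b+1-c)}{(c-a-b)\Gamma(a)\Gamma(b)}.$$ Then $$0<P(a,b,c)-1<\frac{P(a,b,c)-F(a,b,c;w)}{(1-w)^{c-a-b}}<Q(a,b,c).$$
   Context: $F(\alpha,\beta,\gamma;w)$ denotes the Gauss hypergeometric function ${}_2F_1$ and $\Gamma$ the Gamma function. *)

(* Defs.v *)
From Stdlib Require Import Reals Factorial.
From Coquelicot Require Import Coquelicot.
Open Scope R_scope.

Fixpoint poch (x : R) (n : nat) : R :=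
  match n with
  | O => 1
  | S k => poch x k * (x + INR k)
  end.

(* Euler's Gamma function, as the improper integral
   Gamma(x) = int_0^oo t^(x-1) e^(-t) dt  (meaningful for x > 0,
   which is the only case used). *)
Definition Gamma (x : R) : R :=
  RInt_gen (fun t => Rpower t (x - 1) * exp (- t))
           (at_right 0) (Rbar_locally p_infty).

Definition hyp2F1 (a b c w : R) : R :=
  Series (fun n => poch a n * poch b n / (poch c n * INR (fact n)) * w ^ n).

Definition P_abc (a b c : R) : R :=
  Gamma c * Gamma (c - a - b) / (Gamma (c - a) * Gamma (c - b)).

Definition Q_abc (a b c : R) : R :=
  Gamma c * Gamma (a + b + 1 - c) / ((c - a - b) * Gamma a * Gamma b).

(* Main.v *)
Require Import Defs.
From Stdlib Require Import Reals Lra Lia Psatz ZArith Classical.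
From Coquelicot Require Import Coquelicot.
Open Scope R_scope.


Definition gf (x t : R) : R := Rpower t (x - 1) * exp (- t).

Lemma gf_exp x t : 0 < t -> gf x t = exp ((x-1) * ln t - t).
Proof. intros. unfold gf, Rpower. rewrite <- exp_plus. f_equal; ring. Qed.

Lemma gf_pos x t : 0 < t -> 0 < gf x t.
Proof. intros. rewrite gf_exp; auto. apply exp_pos. Qed.

Lemma gf_cont x t : 0 < t -> continuous (gf x) t.
Proof.
  intros Ht. apply (ex_derive_continuous (gf x)). unfold gf, Rpower.
  auto_derive. lra.
Qed.

Lemma ex_RInt_gf x a b : 0 < a -> 0 < b -> ex_RInt (gf x) a b.
Proof.
  intros Ha Hb. apply (ex_RInt_continuous (V:=R_CompleteNormedModule)). intros z Hz. apply gf_cont.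
  destruct Hz as [Hz _]. eapply Rlt_le_trans; [|exact Hz].
  unfold Rmin; destruct Rle_dec; lra.
Qed.

Lemma pow_cont y t : 0 < t -> continuous (fun t => Rpower t y) t.
Proof. intros Ht. apply (ex_derive_continuous (fun t => Rpower t y)). unfold Rpower. auto_derive. lra. Qed.

Lemma RInt_correct_R (f : R -> R) a b : ex_RInt f a b -> is_RInt f a b (RInt f a b).
Proof. intros H. exact (RInt_correct (V:=R_CompleteNormedModule) f a b H). Qed.

Lemma ex_RInt_cont_R (f : R -> R) a b : (forall z, Rmin a b <= z <= Rmax a b -> continuous f z) -> ex_RInt f a b.
Proof. intros H. exact (ex_RInt_continuous (V:=R_CompleteNormedModule) f a b H). Qed.

Lemma gf_le_small x t : 0 < t <= 1 -> gf x t <= Rpower t (x-1).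
Proof.
  intros Ht. unfold gf. rewrite <- (Rmult_1_r (Rpower t (x-1))) at 2.
  apply Rmult_le_compat_l. unfold Rpower; left; apply exp_pos.
  rewrite <- exp_0. left. apply exp_increasing. lra.
Qed.

Lemma gf_le_large x t : 0 < x -> 1 <= t -> gf x t <= exp (x * ln (2*x)) * exp (- t / 2).
Proof.
  intros Hx Ht. rewrite gf_exp; [|lra]. rewrite <- exp_plus.
  destruct (Req_dec ((x - 1) * ln t - t) (x * ln (2 * x) + - t / 2)) as [E|E].
  rewrite E; lra.
  left; apply exp_increasing.
  assert (Hl : 0 <= ln t). { rewrite <- ln_1. destruct (Req_dec t 1). subst; lra. left; apply ln_increasing; lra. }
  assert (H1 := exp_ineq1_le (ln (t / (2*x)))).
  rewrite exp_ln in H1 by (apply Rdiv_lt_0_compat; lra).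
  rewrite ln_div in H1 by lra.
  assert (H2 : x * (1 + (ln t - ln (2*x))) <= x * (t / (2*x))) by (apply Rmult_le_compat_l; lra).
  assert (H3 : x * (t / (2*x)) = t/2) by (field; lra).
  nra.
Qed.

Lemma is_derive_powx x t : 0 < x -> 0 < t -> is_derive (fun t => Rpower t x / x) t (Rpower t (x-1)).
Proof.
  intros Hx Ht. unfold Rpower. auto_derive. lra.
  replace ((x-1) * ln t) with (x * ln t + - ln t) by ring.
  rewrite exp_plus, exp_Ropp, exp_ln by lra. field. lra.
Qed.

Lemma int_small x e : 0 < x -> 0 < e <= 1 -> RInt (gf x) e 1 <= 1 / x.
Proof.
  intros Hx He.
  assert (HI : is_RInt (fun t => Rpower t (x-1)) e 1 (Rpower 1 x / x - Rpower e x / x)).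
  { apply (is_RInt_derive (fun t => Rpower t x / x)).
    - intros t Ht. apply is_derive_powx; auto. unfold Rmin in Ht; destruct Rle_dec; lra.
    - intros t Ht. apply pow_cont. unfold Rmin in Ht; destruct Rle_dec; lra. }
  apply Rle_trans with (Rpower 1 x / x - Rpower e x / x).
  - apply (is_RInt_le (gf x) (fun t => Rpower t (x-1)) e 1); auto. lra.
    apply RInt_correct_R. apply ex_RInt_gf; lra.
    intros t Ht. apply gf_le_small. lra.
  - unfold Rpower at 1. rewrite ln_1, Rmult_0_r, exp_0.
    assert (0 < exp (x * ln e) / x) by (apply Rdiv_lt_0_compat; [apply exp_pos|lra]).
    unfold Rdiv in *. unfold Rpower. lra.
Qed.

Lemma int_large x M : 0 < x -> 1 <= M -> RInt (gf x) 1 M <= 2 * exp (x * ln (2*x)).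
Proof.
  intros Hx HM. set (C := exp (x * ln (2*x))).
  assert (HC : 0 < C) by apply exp_pos.
  assert (HI : is_RInt (fun t => C * exp (- t / 2)) 1 M
                 ((- 2 * C * exp (- M / 2)) - (- 2 * C * exp (- 1 / 2)))).
  { apply (is_RInt_derive (fun t => - 2 * C * exp (- t / 2))).
    - intros t Ht. auto_derive. auto. unfold Rdiv. set (E := exp _). lra.
    - intros t Ht. apply (ex_derive_continuous (fun t => C * exp (- t / 2))). auto_derive. auto. }
  apply Rle_trans with ((- 2 * C * exp (- M / 2)) - (- 2 * C * exp (- 1 / 2))).
  - apply (is_RInt_le (gf x) (fun t => C * exp (- t / 2)) 1 M); auto.
    apply RInt_correct_R. apply ex_RInt_gf; lra.
    intros t Ht. apply gf_le_large; lra.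
  - assert (0 < exp (- M / 2)) by apply exp_pos.
    assert (exp (- 1 / 2) <= 1). { rewrite <- exp_0. left. apply exp_increasing. lra. }
    nra.
Qed.

Lemma mono_lim (G : R -> R) (B : R) :
  (forall u v, 1 <= u -> u <= v -> G u <= G v) -> (forall u, 1 <= u -> G u <= B) ->
  exists L, (forall u, 1 <= u -> G u <= L) /\
    forall eps, 0 < eps -> exists M, 1 <= M /\ forall u, M <= u -> L - eps < G u.
Proof.
  intros Hm Hb.
  set (E := fun y => exists u, 1 <= u /\ y = G u).
  assert (HE : bound E). { exists B. intros y [u [Hu ->]]. auto. }
  assert (HE2 : exists y, E y). { exists (G 1). exists 1. split; auto; lra. }
  destruct (completeness E HE HE2) as [L [HL1 HL2]].
  exists L. split.
  - intros u Hu. apply HL1. exists u; auto.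
  - intros eps Heps.
    destruct (Classical_Prop.classic (exists M, 1 <= M /\ L - eps < G M)) as [[M [HM1 HM2]]|Hn].
    + exists M. split; auto. intros u Hu. eapply Rlt_le_trans; [exact HM2|]. apply Hm; lra.
    + exfalso. assert (L <= L - eps); [|lra].
      apply HL2. intros y [u [Hu ->]].
      destruct (Rle_dec (G u) (L - eps)); auto. exfalso; apply Hn. exists u. split; auto; lra.
Qed.

Lemma RInt_Chasles_R (f : R -> R) a b c : ex_RInt f a b -> ex_RInt f b c ->
  RInt f a b + RInt f b c = RInt f a c.
Proof. intros H1 H2. exact (RInt_Chasles (V:=R_CompleteNormedModule) f a b c H1 H2). Qed.

Lemma RInt_gf_ge0 x a b : 0 < a -> a <= b -> 0 <= RInt (gf x) a b.
Proof.
  intros Ha Hab. apply RInt_ge_0; auto. apply ex_RInt_gf; lra.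
  intros t Ht. left. apply gf_pos. lra.
Qed.

Lemma gamma_exists x : 0 < x ->
  exists l, is_RInt_gen (gf x) (at_right 0) (Rbar_locally p_infty) l /\ 0 < l.
Proof.
  intros Hx.
  destruct (mono_lim (fun u => RInt (gf x) 1 u) (2 * exp (x * ln (2*x)))) as [L1 [HL1a HL1b]].
  { intros u v Hu Huv. rewrite <- (RInt_Chasles_R (gf x) 1 u v) by (apply ex_RInt_gf; lra).
    assert (0 <= RInt (gf x) u v) by (apply RInt_gf_ge0; lra). lra. }
  { intros u Hu. apply int_large; auto. }
  destruct (mono_lim (fun v => RInt (gf x) (/ v) 1) (1 / x)) as [L0 [HL0a HL0b]].
  { intros u v Hu Huv.
    assert (Hi : / v <= / u) by (apply Rinv_le_contravar; lra).
    assert (0 < / v) by (apply Rinv_0_lt_compat; lra).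
    rewrite <- (RInt_Chasles_R (gf x) (/ v) (/ u) 1) by (apply ex_RInt_gf; lra).
    assert (0 <= RInt (gf x) (/ v) (/ u)) by (apply RInt_gf_ge0; lra). lra. }
  { intros u Hu. apply int_small; auto.
    split. apply Rinv_0_lt_compat; lra. rewrite <- Rinv_1. apply Rinv_le_contravar; lra. }
  exists (L0 + L1). split.
  - intros P [eps HP].
    assert (He2 : 0 < eps / 2) by (destruct eps; simpl; lra).
    destruct (HL1b _ He2) as [M1 [HM1 HM1']].
    destruct (HL0b _ He2) as [M0 [HM0 HM0']].
    assert (Hd : 0 < / M0) by (apply Rinv_0_lt_compat; lra).
    apply (Filter_prod _ _ _ (fun a => 0 < a < / M0) (fun b => M1 < b)).
    + exists (mkposreal _ Hd). intros y Hy Hy0. split; auto.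
      unfold ball in Hy; simpl in Hy; unfold AbsRing_ball, abs, minus, plus, opp in Hy; simpl in Hy.
      rewrite Ropp_0, Rplus_0_r, Rabs_right in Hy by lra. exact Hy.
    + exists M1. auto.
    + intros a b [Ha1 Ha2] Hb. simpl.
      assert (Ha3 : M0 <= / a).
      { rewrite <- (Rinv_inv M0). apply Rinv_le_contravar; lra. }
      assert (Ha4 : a <= 1).
      { assert (/ a * a = 1) by (field; lra). assert (1 <= / a) by lra. nra. }
      exists (RInt (gf x) a 1 + RInt (gf x) 1 b). split.
      * rewrite RInt_Chasles_R by (apply ex_RInt_gf; lra).
        apply RInt_correct_R. apply ex_RInt_gf; lra.
      * apply HP. unfold ball; simpl; unfold AbsRing_ball, abs, minus, plus, opp; simpl.
        specialize (HM1' b ltac:(lra)). specialize (HL1a b ltac:(lra)).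
        specialize (HM0' (/ a) Ha3). specialize (HL0a (/ a) ltac:(lra)).
        rewrite Rinv_inv in HM0', HL0a. simpl in *.
        apply Rabs_def1; lra.
  - assert (0 < RInt (gf x) 1 2).
    { apply RInt_gt_0. lra. intros; apply gf_pos; lra. intros; apply gf_cont; lra. }
    assert (RInt (gf x) 1 2 <= L1) by (apply HL1a; lra).
    assert (RInt (gf x) (/ 1) 1 <= L0) by (apply HL0a; lra).
    rewrite Rinv_1, RInt_point in H1. simpl in H1. unfold zero in H1; simpl in H1. lra.
Qed.

Lemma Gamma_is x : 0 < x -> is_RInt_gen (gf x) (at_right 0) (Rbar_locally p_infty) (Gamma x).
Proof.
  intros Hx. destruct (gamma_exists x Hx) as [l [Hl _]].
  replace (Gamma x) with l; auto. symmetry. unfold Gamma.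
  apply (is_RInt_gen_unique (V:=R_CompleteNormedModule)). exact Hl.
Qed.

Lemma Gamma_pos x : 0 < x -> 0 < Gamma x.
Proof.
  intros Hx. destruct (gamma_exists x Hx) as [l [Hl Hp]].
  replace (Gamma x) with l; auto. symmetry. unfold Gamma.
  apply (is_RInt_gen_unique (V:=R_CompleteNormedModule)). exact Hl.
Qed.

Definition gprim (x t : R) : R := - exp (x * ln t - t).

Lemma gprim_derive x t : 0 < t -> is_derive (gprim x) t (gf (x+1) t - x * gf x t).
Proof.
  intros Ht. unfold gprim. auto_derive. lra.
  rewrite !gf_exp by lra.
  replace ((x + 1 - 1) * ln t - t) with (x * ln t - t) by ring.
  replace ((x - 1) * ln t - t) with ((x * ln t - t) + - ln t) by ring.
  rewrite (exp_plus _ (- ln t)), exp_Ropp, exp_ln by lra. replace (x * ln t + - t) with (x * ln t - t) by ring. field. lra.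
Qed.

Lemma ball_R (c e y : R) : ball c e y <-> Rabs (y - c) < e.
Proof. unfold ball; simpl; unfold AbsRing_ball, abs, minus, plus, opp; simpl. tauto. Qed.

Lemma gprim_lim0 x : 0 < x -> filterlim (gprim x) (at_right 0) (locally 0).
Proof.
  intros Hx. apply filterlim_locally. intros eps.
  assert (Hd : 0 < Rmin 1 (exp (ln eps / x))) by (apply Rmin_pos; [lra|apply exp_pos]).
  exists (mkposreal _ Hd). intros t Ht Ht0. apply ball_R.
  assert (Ht' : Rabs (t - 0) < Rmin 1 (exp (ln eps / x))) by exact Ht. clear Ht.
  rename Ht' into Ht.
  unfold Rminus in *; rewrite ?Ropp_0, ?Rplus_0_r in *. rewrite Rabs_right in Ht by lra.
  unfold gprim. rewrite Rabs_Ropp, Rabs_right by (left; apply exp_pos).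
  assert (Ht2 : t < exp (ln eps / x)) by (eapply Rlt_le_trans; [exact Ht|apply Rmin_r]).
  assert (Hl : ln t < ln eps / x).
  { rewrite <- (ln_exp (ln eps / x)). apply ln_increasing; lra. }
  assert (x * ln t < ln eps).
  { apply Rmult_lt_compat_l with (r := x) in Hl; auto.
    replace (x * (ln eps / x)) with (ln eps) in Hl by (field; lra). lra. }
  rewrite <- (exp_ln eps) by (destruct eps; simpl; lra).
  apply exp_increasing. lra.
Qed.

Lemma gprim_liminf x : 0 < x -> filterlim (gprim x) (Rbar_locally p_infty) (locally 0).
Proof.
  intros Hx. apply filterlim_locally. intros eps.
  set (C := exp ((x+1) * ln (2*(x+1)))).
  assert (HC : 0 < C) by apply exp_pos.
  assert (He : 0 < eps) by (destruct eps; simpl; lra).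
  exists (Rmax 1 (- 2 * ln (eps / C))). intros t Ht.
  assert (Ht1 : 1 < t) by (eapply Rle_lt_trans; [apply Rmax_l|exact Ht]).
  assert (Ht2 : - 2 * ln (eps / C) < t) by (eapply Rle_lt_trans; [apply Rmax_r|exact Ht]).
  apply ball_R. rewrite Rminus_0_r. unfold gprim.
  rewrite Rabs_Ropp, Rabs_right by (left; apply exp_pos).
  assert (Hb := gf_le_large (x+1) t ltac:(lra) ltac:(lra)).
  rewrite gf_exp in Hb by lra. replace ((x + 1 - 1) * ln t - t) with (x * ln t - t) in Hb by ring.
  fold C in Hb. eapply Rle_lt_trans; [exact Hb|].
  assert (exp (- t / 2) < eps / C).
  { rewrite <- (exp_ln (eps / C)) by (apply Rdiv_lt_0_compat; lra). apply exp_increasing. lra. }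
  apply Rmult_lt_compat_l with (r := C) in H; auto.
  replace (C * (eps / C)) with (pos eps) in H by (field; lra). exact H.
Qed.

Lemma Gamma_succ x : 0 < x -> Gamma (x + 1) = x * Gamma x.
Proof.
  intros Hx.
  assert (H1 : is_RInt_gen (Derive (gprim x)) (at_right 0) (Rbar_locally p_infty) (0 - 0)).
  { apply is_RInt_gen_Derive.
    - apply (Filter_prod _ _ _ (fun a => 0 < a) (fun b => 0 < b)).
      exists (mkposreal _ Rlt_0_1). intros; auto. exists 0; auto.
      intros a b Ha Hb y Hy. simpl in Hy.
      eexists. apply gprim_derive. unfold Rmin in Hy; destruct Rle_dec; lra.
    - apply (Filter_prod _ _ _ (fun a => 0 < a) (fun b => 0 < b)).
      exists (mkposreal _ Rlt_0_1). intros; auto. exists 0; auto.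
      intros a b Ha Hb y Hy. simpl in Hy.
      assert (Hy0 : 0 < y) by (unfold Rmin in Hy; destruct Rle_dec; lra).
      apply (continuous_ext_loc _ (fun t => gf (x+1) t - x * gf x t)).
      + assert (Hd : 0 < y / 2) by lra. exists (mkposreal _ Hd). intros z Hz.
        change (Rabs (z - y) < y / 2) in Hz.
        symmetry. apply is_derive_unique. apply gprim_derive.
        apply Rabs_def2 in Hz. lra.
      + apply (ex_derive_continuous (fun t => gf (x+1) t - x * gf x t)).
        unfold gf, Rpower. auto_derive. lra.
    - apply gprim_lim0; auto.
    - apply gprim_liminf; auto. }
  assert (H2 := is_RInt_gen_scal _ x _ (Gamma_is x Hx)).
  assert (H3 := is_RInt_gen_plus _ _ _ _ H1 H2).
  assert (H4 : is_RInt_gen (gf (x+1)) (at_right 0) (Rbar_locally p_infty) (plus (0 - 0) (scal x (Gamma x)))).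
  { eapply is_RInt_gen_ext; [|exact H3].
    apply (Filter_prod _ _ _ (fun a => 0 < a) (fun b => 0 < b)).
    exists (mkposreal _ Rlt_0_1). intros; auto. exists 0; auto.
    intros a b Ha Hb y Hy. simpl in Hy.
    assert (Hy0 : 0 < y) by (unfold Rmin in Hy; destruct Rle_dec; lra).
    rewrite (is_derive_unique _ _ _ (gprim_derive x y Hy0)).
    unfold plus, scal; simpl. unfold mult; simpl. ring. }
  unfold Gamma at 1. fold (gf (x+1)).
  rewrite (is_RInt_gen_unique (V:=R_CompleteNormedModule) _ _ H4).
  unfold plus, scal; simpl. unfold mult; simpl. ring.
Qed.

Lemma exp_convex l A B : 0 <= l <= 1 -> exp (l * A + (1 - l) * B) <= l * exp A + (1 - l) * exp B.
Proof.
  intros Hl. set (m := l * A + (1 - l) * B).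
  assert (H1 := exp_ineq1_le (A - m)). assert (H2 := exp_ineq1_le (B - m)).
  replace (A - m) with (A + - m) in H1 by ring. replace (B - m) with (B + - m) in H2 by ring.
  rewrite exp_plus, exp_Ropp in H1, H2.
  assert (Hm : 0 < exp m) by apply exp_pos.
  assert (E1 : exp m * (1 + (A + - m)) <= exp A).
  { apply Rmult_le_compat_l with (r := exp m) in H1; [|lra].
    replace (exp m * (exp A * / exp m)) with (exp A) in H1 by (field; lra). exact H1. }
  assert (E2 : exp m * (1 + (B + - m)) <= exp B).
  { apply Rmult_le_compat_l with (r := exp m) in H2; [|lra].
    replace (exp m * (exp B * / exp m)) with (exp B) in H2 by (field; lra). exact H2. }
  assert (l * (exp m * (1 + (A + - m))) + (1 - l) * (exp m * (1 + (B + - m))) = exp m)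
    by (unfold m; ring).
  nra.
Qed.

Lemma gf_pointwise x y l I J t : 0 < t -> 0 < I -> 0 < J -> 0 <= l <= 1 ->
  gf (l * x + (1 - l) * y) t <=
  (Rpower I l * Rpower J (1 - l)) * (l / I * gf x t + (1 - l) / J * gf y t).
Proof.
  intros Ht HI HJ Hl. rewrite !gf_exp by lra.
  set (A := (x - 1) * ln t - t - ln I). set (B := (y - 1) * ln t - t - ln J).
  assert (EA : exp ((x - 1) * ln t - t) = I * exp A).
  { unfold A. replace ((x - 1) * ln t - t - ln I) with ((x - 1) * ln t - t + - ln I) by ring.
    rewrite exp_plus, exp_Ropp, exp_ln by lra. field. lra. }
  assert (EB : exp ((y - 1) * ln t - t) = J * exp B).
  { unfold B. replace ((y - 1) * ln t - t - ln J) with ((y - 1) * ln t - t + - ln J) by ring.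
    rewrite exp_plus, exp_Ropp, exp_ln by lra. field. lra. }
  assert (EZ : exp ((l * x + (1 - l) * y - 1) * ln t - t) =
               (Rpower I l * Rpower J (1 - l)) * exp (l * A + (1 - l) * B)).
  { unfold Rpower, A, B. rewrite <- !exp_plus. f_equal. ring. }
  rewrite EA, EB, EZ.
  replace (l / I * (I * exp A) + (1 - l) / J * (J * exp B)) with (l * exp A + (1 - l) * exp B) by (field; lra).
  apply Rmult_le_compat_l. unfold Rpower. left; apply Rmult_lt_0_compat; apply exp_pos.
  apply exp_convex; auto.
Qed.

Lemma Gamma_logconv x y l : 0 < x -> 0 < y -> 0 <= l <= 1 ->
  Gamma (l * x + (1 - l) * y) <= Rpower (Gamma x) l * Rpower (Gamma y) (1 - l).
Proof.
  intros Hx Hy Hl.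
  assert (Hz : 0 < l * x + (1 - l) * y) by nra.
  assert (HI := Gamma_pos x Hx). assert (HJ := Gamma_pos y Hy).
  set (K := Rpower (Gamma x) l * Rpower (Gamma y) (1 - l)).
  assert (G1 := is_RInt_gen_scal _ (l / Gamma x) _ (Gamma_is x Hx)).
  assert (G2 := is_RInt_gen_scal _ ((1 - l) / Gamma y) _ (Gamma_is y Hy)).
  assert (G3 := is_RInt_gen_plus _ _ _ _ G1 G2).
  assert (G4 := is_RInt_gen_scal _ K _ G3).
  assert (Hn : norm (Gamma (l * x + (1 - l) * y)) <=
      scal K (plus (scal (l / Gamma x) (Gamma x)) (scal ((1 - l) / Gamma y) (Gamma y)))).
  { apply (RInt_gen_norm (V:=R_CompleteNormedModule) (Fa := at_right 0) (Fb := Rbar_locally p_infty) (gf (l * x + (1 - l) * y))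
       (fun t => K * (l / Gamma x * gf x t + (1 - l) / Gamma y * gf y t))).
    - apply (Filter_prod _ _ _ (fun a => a < 1) (fun b => 1 < b)).
      exists (mkposreal _ Rlt_0_1). intros t Ht _. change (Rabs (t - 0) < 1) in Ht.
      apply Rabs_def2 in Ht. lra.
      exists 1; auto. intros a b Ha Hb. simpl. lra.
    - apply (Filter_prod _ _ _ (fun a => 0 < a) (fun b => 0 < b)).
      exists (mkposreal _ Rlt_0_1). intros; auto. exists 0; auto.
      intros a b Ha Hb t Ht. simpl in Ht.
      unfold norm; simpl; unfold abs; simpl.
      rewrite Rabs_right by (left; apply gf_pos; lra).
      unfold plus, scal; simpl; unfold mult; simpl.
      apply gf_pointwise; auto; lra.
    - apply Gamma_is; auto.
    - exact G4. }
  unfold norm in Hn; simpl in Hn; unfold abs in Hn; simpl in Hn.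
  unfold plus, scal in Hn; simpl in Hn; unfold mult in Hn; simpl in Hn.
  replace (K * (l / Gamma x * Gamma x + (1 - l) / Gamma y * Gamma y)) with K in Hn by (field; lra).
  eapply Rle_trans; [apply Rle_abs|exact Hn].
Qed.

Lemma Gamma_poch x n : 0 < x -> Gamma (x + INR n) = poch x n * Gamma x.
Proof.
  intros Hx. induction n as [|n IH].
  - simpl. rewrite Rplus_0_r. ring.
  - rewrite S_INR. replace (x + (INR n + 1)) with ((x + INR n) + 1) by ring.
    rewrite Gamma_succ by (assert (0 <= INR n) by apply pos_INR; lra).
    rewrite IH. simpl. ring.
Qed.

Lemma lim_lin_inf c : is_lim_seq (fun n => INR n + c) p_infty.
Proof.
  eapply is_lim_seq_plus. apply is_lim_seq_INR. apply is_lim_seq_const. unfold is_Rbar_plus; simpl. reflexivity.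
Qed.

Lemma lim_ratio_lin p q : -1 < q -> is_lim_seq (fun n => (INR n + 1 + p) / (INR n + 1 + q)) 1.
Proof.
  intros Hq.
  assert (H1 : is_lim_seq (fun n => / (INR n + (1 + q))) 0).
  { replace (Finite 0) with (Rbar_inv p_infty) by reflexivity.
    apply is_lim_seq_inv. apply lim_lin_inf. discriminate. }
  assert (H2 := is_lim_seq_scal_l _ (p - q) _ H1).
  assert (H3 := is_lim_seq_plus' _ _ 1 _ (is_lim_seq_const 1) H2).
  simpl in H3. rewrite Rmult_0_r, Rplus_0_r in H3.
  eapply is_lim_seq_ext; [|exact H3]. intros n. simpl.
  assert (0 <= INR n) by apply pos_INR.
  field. lra.
Qed.

Definition hW (d : R) (n : nat) : R :=
  Gamma (INR n + 1 + d) / (Gamma (INR n + 1) * Rpower (INR n + 1) d).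

Lemma hW_bounds d t : 0 <= d <= 1 -> 0 < t ->
  t / (t + d) <= Gamma (t + d) / (Gamma t * Rpower t d) <= 1.
Proof.
  intros Hd Ht.
  assert (Gt := Gamma_pos t Ht). assert (Gtd := Gamma_pos (t + d) ltac:(lra)).
  assert (Pt : 0 < Rpower t d) by (unfold Rpower; apply exp_pos).
  assert (Ptd : 0 < Rpower (t+d) (1 - d)) by (unfold Rpower; apply exp_pos).
  assert (Ptd' : 0 < Rpower (t+d) d) by (unfold Rpower; apply exp_pos).
  split.
  - assert (Hl := Gamma_logconv (t + d) (t + d + 1) d ltac:(lra) ltac:(lra) ltac:(lra)).
    replace (d * (t + d) + (1 - d) * (t + d + 1)) with (t + 1) in Hl by ring.
    rewrite !Gamma_succ in Hl by lra.
    rewrite <- Rpower_mult_distr in Hl by lra.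
    replace (Rpower (Gamma (t + d)) d * (Rpower (t + d) (1 - d) * Rpower (Gamma (t + d)) (1 - d)))
      with (Rpower (t + d) (1 - d) * (Rpower (Gamma (t + d)) d * Rpower (Gamma (t + d)) (1 - d))) in Hl by ring.
    rewrite <- Rpower_plus in Hl. replace (d + (1 - d)) with 1 in Hl by ring.
    rewrite Rpower_1 in Hl by lra.
    assert (Hm : Rpower t d <= Rpower (t + d) d) by (apply Rle_Rpower_l; lra).
    assert (Hp : Rpower (t + d) (1 - d) * Rpower (t + d) d = t + d).
    { rewrite <- Rpower_plus. replace (1 - d + d) with 1 by ring. apply Rpower_1; lra. }
    apply Rle_trans with (t / (Rpower (t + d) (1 - d) * Rpower t d)).
    + apply Rmult_le_compat_l; [lra|]. apply Rinv_le_contravar. nra.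
      nra.
    + apply Rmult_le_reg_r with (r := Rpower (t + d) (1 - d) * Rpower t d * Gamma t). apply Rmult_lt_0_compat; [apply Rmult_lt_0_compat|]; auto.
      replace (t / (Rpower (t + d) (1 - d) * Rpower t d) * (Rpower (t + d) (1 - d) * Rpower t d * Gamma t))
        with (t * Gamma t) by (field; lra).
      replace (Gamma (t + d) / (Gamma t * Rpower t d) * (Rpower (t + d) (1 - d) * Rpower t d * Gamma t))
        with (Rpower (t + d) (1 - d) * Gamma (t + d)) by (field; lra).
      lra.
  - assert (Hl := Gamma_logconv t (t + 1) (1 - d) ltac:(lra) ltac:(lra) ltac:(lra)).
    replace ((1 - d) * t + (1 - (1 - d)) * (t + 1)) with (t + d) in Hl by ring.
    replace (1 - (1 - d)) with d in Hl by ring.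
    rewrite Gamma_succ in Hl by lra.
    rewrite <- Rpower_mult_distr in Hl by lra.
    replace (Rpower (Gamma t) (1 - d) * (Rpower t d * Rpower (Gamma t) d))
      with (Rpower t d * (Rpower (Gamma t) (1 - d) * Rpower (Gamma t) d)) in Hl by ring.
    rewrite <- Rpower_plus in Hl. replace (1 - d + d) with 1 in Hl by ring.
    rewrite Rpower_1 in Hl by lra.
    apply Rmult_le_reg_r with (r := Gamma t * Rpower t d). nra.
    replace (Gamma (t + d) / (Gamma t * Rpower t d) * (Gamma t * Rpower t d)) with (Gamma (t + d)) by (field; lra).
    lra.
Qed.

Lemma hW_lim01 d : 0 <= d <= 1 -> is_lim_seq (hW d) 1.
Proof.
  intros Hd.
  apply is_lim_seq_le_le with (u := fun n => (INR n + 1 + 0) / (INR n + 1 + d)) (w := fun _ => 1).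
  - intros n. assert (0 <= INR n) by apply pos_INR. rewrite Rplus_0_r.
    apply hW_bounds; lra.
  - apply lim_ratio_lin; lra.
  - apply is_lim_seq_const.
Qed.

Lemma hW_lim d : 0 <= d -> is_lim_seq (hW d) 1.
Proof.
  intros Hd.
  assert (Hk : forall k : nat, forall d, 0 <= d <= INR k + 1 -> is_lim_seq (hW d) 1).
  { induction k as [|k IH]; intros e He.
    - simpl in He. apply hW_lim01. lra.
    - destruct (Rle_dec e 1) as [He1|He1]. apply hW_lim01; lra.
      rewrite S_INR in He. apply Rnot_le_lt in He1.
      assert (H1 := IH (e - 1) ltac:(lra)).
      assert (H2 := lim_ratio_lin (e - 1) 0 ltac:(lra)).
      assert (H3 := is_lim_seq_mult' _ _ _ _ H1 H2).
      rewrite Rmult_1_r in H3.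
      eapply is_lim_seq_ext; [|exact H3]. intros n. unfold hW.
      assert (0 <= INR n) by apply pos_INR.
      replace (INR n + 1 + e) with ((INR n + 1 + (e - 1)) + 1) by ring.
      rewrite (Gamma_succ (INR n + 1 + (e - 1))) by lra.
      assert (Ee : Rpower (INR n + 1) e = Rpower (INR n + 1) (e - 1) * (INR n + 1)).
      { rewrite <- (Rpower_1 (INR n + 1)) at 3 by lra. rewrite <- Rpower_plus. f_equal; ring. }
      rewrite Ee.
      assert (0 < Gamma (INR n + 1)) by (apply Gamma_pos; lra).
      assert (0 < Rpower (INR n + 1) (e - 1)) by (unfold Rpower; apply exp_pos).
      rewrite Rplus_0_r. field. lra. }
  destruct (archimed d) as [Ha _].
  apply (Hk (Z.to_nat (up d))). split; auto.
  rewrite INR_IZR_INZ. rewrite Z2Nat.id.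
  - lra.
  - apply le_IZR. lra.
Qed.

Lemma Gamma_ratio_lim x y z u : 0 < x -> 0 < y -> 0 < z -> 0 < u -> x + y = z + u ->
  is_lim_seq (fun n => Gamma (INR n + x) * Gamma (INR n + y) / (Gamma (INR n + z) * Gamma (INR n + u))) 1.
Proof.
  intros Hx Hy Hz Hu Hs.
  apply is_lim_seq_incr_1.
  assert (H := is_lim_seq_div' _ _ _ _ (is_lim_seq_mult' _ _ _ _ (hW_lim x ltac:(lra)) (hW_lim y ltac:(lra)))
                 (is_lim_seq_mult' _ _ _ _ (hW_lim z ltac:(lra)) (hW_lim u ltac:(lra))) ltac:(lra)).
  replace (1 * 1 / (1 * 1)) with 1 in H by field.
  eapply is_lim_seq_ext; [|exact H]. intros n. unfold hW. rewrite S_INR.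
  assert (0 <= INR n) by apply pos_INR.
  set (t := INR n + 1).
  assert (Ht : 0 < t) by (unfold t; lra).
  assert (G0 := Gamma_pos t Ht).
  assert (Gx := Gamma_pos (t + x) ltac:(lra)). assert (Gy := Gamma_pos (t + y) ltac:(lra)).
  assert (Gz := Gamma_pos (t + z) ltac:(lra)). assert (Gu := Gamma_pos (t + u) ltac:(lra)).
  assert (Px : 0 < Rpower t x) by (unfold Rpower; apply exp_pos).
  assert (Py : 0 < Rpower t y) by (unfold Rpower; apply exp_pos).
  assert (Pz : 0 < Rpower t z) by (unfold Rpower; apply exp_pos).
  assert (Pu : 0 < Rpower t u) by (unfold Rpower; apply exp_pos).
  assert (E : Rpower t x * Rpower t y = Rpower t z * Rpower t u).
  { rewrite <- !Rpower_plus. rewrite Hs. reflexivity. }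
  replace (Rpower t y) with (Rpower t z * Rpower t u / Rpower t x) by (rewrite <- E; field; lra).
  field. repeat split; lra.
Qed.

Definition Acoef (a b c : R) (n : nat) : R := poch a n * poch b n / (poch c n * INR (fact n)).
Definition alc (s : R) (n : nat) : R := poch (- s) n / INR (fact n).

Lemma poch_pos x n : 0 < x -> 0 < poch x n.
Proof.
  intros Hx. induction n; simpl. lra. apply Rmult_lt_0_compat; auto.
  assert (0 <= INR n) by apply pos_INR. lra.
Qed.

Lemma poch_shift x n : x * poch (x + 1) n = poch x n * (x + INR n).
Proof.
  induction n. simpl. ring.
  change (poch (x + 1) (S n)) with (poch (x + 1) n * (x + 1 + INR n)).
  change (poch x (S n)) with (poch x n * (x + INR n)).
  rewrite <- Rmult_assoc, IHn. rewrite S_INR. ring.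
Qed.

Lemma fact_pos n : 0 < INR (fact n).
Proof. apply lt_0_INR. apply lt_O_fact. Qed.

Lemma INR_fact_S n : INR (fact (S n)) = (INR n + 1) * INR (fact n).
Proof. rewrite fact_simpl, mult_INR, S_INR. reflexivity. Qed.

Lemma A_pos a b c n : 0 < a -> 0 < b -> 0 < c -> 0 < Acoef a b c n.
Proof.
  intros. unfold Acoef. apply Rdiv_lt_0_compat.
  apply Rmult_lt_0_compat; apply poch_pos; auto.
  apply Rmult_lt_0_compat; [apply poch_pos; auto|apply fact_pos].
Qed.

Lemma A_S a b c n : 0 < c ->
  Acoef a b c (S n) = Acoef a b c n * ((a + INR n) * (b + INR n)) / ((c + INR n) * (INR n + 1)).
Proof.
  intros Hc. unfold Acoef. rewrite INR_fact_S.
  change (poch a (S n)) with (poch a n * (a + INR n)).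
  change (poch b (S n)) with (poch b n * (b + INR n)).
  change (poch c (S n)) with (poch c n * (c + INR n)).
  assert (0 < poch c n) by (apply poch_pos; auto).
  assert (0 <= INR n) by apply pos_INR. assert (0 < INR (fact n)) by apply fact_pos.
  field. repeat split; lra.
Qed.

Lemma A_0 a b c : Acoef a b c 0 = 1.
Proof. unfold Acoef. simpl. field. Qed.

Lemma alc_S s n : alc s (S n) = alc s n * (INR n - s) / (INR n + 1).
Proof.
  unfold alc. rewrite INR_fact_S.
  change (poch (- s) (S n)) with (poch (- s) n * (- s + INR n)).
  assert (0 <= INR n) by apply pos_INR. assert (0 < INR (fact n)) by apply fact_pos.
  field. lra.
Qed.

Lemma alc_sum s N : sum_n (alc s) N = poch (1 - s) N / INR (fact N).
Proof.
  induction N.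
  - rewrite sum_O. unfold alc. simpl. reflexivity.
  - rewrite sum_Sn, IHN.
    unfold alc. rewrite !INR_fact_S.
    change (poch (1 - s) (S N)) with (poch (1 - s) N * (1 - s + INR N)).
    change (poch (- s) (S N)) with (poch (- s) N * (- s + INR N)).
    assert (E := poch_shift (- s) N). replace (- s + 1) with (1 - s) in E by ring.
    assert (0 <= INR N) by apply pos_INR. assert (0 < INR (fact N)) by apply fact_pos.
    rewrite <- E. unfold plus; simpl. field. lra.
Qed.

Lemma alc_neg s n : 0 < s < 1 -> alc s (S n) < 0.
Proof.
  intros Hs. unfold alc.
  assert (E := poch_shift (- s) n). replace (- s + 1) with (1 - s) in E by ring.
  change (poch (- s) (S n)) with (poch (- s) n * (- s + INR n)).
  rewrite <- E. apply Rdiv_neg_pos. 2: apply fact_pos.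
  assert (0 < poch (1 - s) n) by (apply poch_pos; lra). nra.
Qed.

Lemma poch_1 N : poch 1 N = INR (fact N).
Proof.
  induction N. reflexivity.
  change (poch 1 (S N)) with (poch 1 N * (1 + INR N)). rewrite IHN, INR_fact_S. ring.
Qed.

Lemma archi_nat (X : R) : exists N : nat, X < INR N.
Proof.
  destruct (archimed (Rmax X 0)) as [Ha _].
  exists (Z.to_nat (up (Rmax X 0))).
  rewrite INR_IZR_INZ. rewrite Z2Nat.id.
  - eapply Rle_lt_trans; [apply Rmax_l|exact Ha].
  - apply le_IZR. assert (0 <= Rmax X 0) by apply Rmax_r. lra.
Qed.

Lemma pow_neg_lim c s : 0 < c -> 0 < s -> is_lim_seq (fun n => Rpower (INR n + c) (- s)) 0.
Proof.
  intros Hc Hs. apply is_lim_seq_spec. intros eps.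
  assert (He : 0 < eps) by (destruct eps; auto).
  destruct (archi_nat (exp (- ln eps / s))) as [N HN].
  exists N. intros n Hn.
  assert (Hn' : INR N <= INR n) by (apply le_INR; lia).
  rewrite Rminus_0_r. unfold Rpower. rewrite Rabs_right by (left; apply exp_pos).
  rewrite <- (exp_ln eps) by auto. apply exp_increasing.
  assert (H1 : - ln eps / s < ln (INR n + c)).
  { rewrite <- (ln_exp (- ln eps / s)). apply ln_increasing. apply exp_pos. lra. }
  apply Rmult_lt_compat_l with (r := s) in H1; auto.
  replace (s * (- ln eps / s)) with (- ln eps) in H1 by (field; lra). lra.
Qed.

Lemma gamma_seq_lim s : 0 < s < 1 -> is_lim_seq (fun N => poch (1 - s) N / INR (fact N)) 0.
Proof.
  intros Hs.
  set (K := Gamma 1 / Gamma (1 - s)).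
  assert (HK : 0 < K) by (apply Rdiv_lt_0_compat; apply Gamma_pos; lra).
  apply is_lim_seq_le_le with (u := fun _ => 0)
    (w := fun N => K * ((INR N + 1 + 0) / (INR N + 1 + - s) * Rpower (INR N + (1 - s)) (- s))).
  - intros N. assert (0 <= INR N) by apply pos_INR. split.
    + left. apply Rdiv_lt_0_compat. apply poch_pos; lra. apply fact_pos.
    + rewrite <- poch_1.
      assert (E1 := Gamma_poch (1 - s) N ltac:(lra)).
      assert (E2 := Gamma_poch 1 N ltac:(lra)).
      assert (G1 := Gamma_pos 1 ltac:(lra)). assert (G2 := Gamma_pos (1 - s) ltac:(lra)).
      assert (P1 : poch (1 - s) N = Gamma (1 - s + INR N) / Gamma (1 - s)) by (rewrite E1; field; lra).
      assert (P2 : poch 1 N = Gamma (1 + INR N) / Gamma 1) by (rewrite E2; field; lra).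
      rewrite P1, P2.
      set (t := INR N + 1 - s).
      assert (Ht : 0 < t) by (unfold t; lra).
      assert (Hb := proj1 (hW_bounds s t ltac:(lra) Ht)).
      replace (t + s) with (1 + INR N) in Hb by (unfold t; ring).
      replace (1 - s + INR N) with t by (unfold t; ring).
      replace (INR N + (1 - s)) with t by (unfold t; ring).
      replace (INR N + 1 + 0) with (1 + INR N) by ring.
      replace (INR N + 1 + - s) with t by (unfold t; ring).
      rewrite Rpower_Ropp.
      assert (Gt := Gamma_pos t Ht). assert (GN := Gamma_pos (1 + INR N) ltac:(lra)).
      assert (Pt : 0 < Rpower t s) by (unfold Rpower; apply exp_pos).
      unfold K.
      apply Rmult_le_reg_r with (r := Gamma (1 - s) * Gamma (1 + INR N) * t * Rpower t s / Gamma 1).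
      { apply Rdiv_lt_0_compat; [|lra]. repeat apply Rmult_lt_0_compat; lra. }
      replace (Gamma t / Gamma (1 - s) / (Gamma (1 + INR N) / Gamma 1) *
                 (Gamma (1 - s) * Gamma (1 + INR N) * t * Rpower t s / Gamma 1))
        with (Gamma t * t * Rpower t s) by (field; repeat split; lra).
      replace (Gamma 1 / Gamma (1 - s) * ((1 + INR N) / t * / Rpower t s) *
                 (Gamma (1 - s) * Gamma (1 + INR N) * t * Rpower t s / Gamma 1))
        with ((1 + INR N) * Gamma (1 + INR N)) by (field; repeat split; lra).
      apply Rmult_le_reg_r with (r := / (1 + INR N)). apply Rinv_0_lt_compat; lra.
      replace ((1 + INR N) * Gamma (1 + INR N) * / (1 + INR N)) with (Gamma (1 + INR N)) by (field; lra).
      apply Rmult_le_reg_r with (r := / (Gamma t * Rpower t s)).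
      apply Rinv_0_lt_compat. nra.
      replace (Gamma t * t * Rpower t s * / (1 + INR N) * / (Gamma t * Rpower t s)) with (t / (1 + INR N)) by (field; repeat split; lra).
      replace (Gamma (1 + INR N) * / (Gamma t * Rpower t s)) with (Gamma (1 + INR N) / (Gamma t * Rpower t s)) by reflexivity.
      exact Hb.
  - apply is_lim_seq_const.
  - replace 0 with (K * (1 * 0)) by ring.
    apply is_lim_seq_scal_l with (a := K) (lu := Finite (1 * 0)).
    apply is_lim_seq_mult'. apply lim_ratio_lin; lra. apply pow_neg_lim; lra.
Qed.

Lemma alc_series s : 0 < s < 1 -> is_series (alc s) 0.
Proof.
  intros Hs. unfold is_series.
  assert (H := gamma_seq_lim s Hs).
  assert (H' : is_lim_seq (sum_n (alc s)) 0).
  { eapply is_lim_seq_ext; [|exact H]. intros N. rewrite alc_sum. reflexivity. }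
  exact H'.
Qed.

Definition rho (a b c : R) (n : nat) : R := Acoef a b c (S n) / (- alc (c - a - b) (S n)).

Lemma poch_Gamma x n : 0 < x -> poch x n = Gamma (x + INR n) / Gamma x.
Proof. intros Hx. rewrite Gamma_poch by auto. assert (0 < Gamma x) by (apply Gamma_pos; auto). field. lra. Qed.

Lemma malc_S s n : - alc s (S n) = s * poch (1 - s) n / INR (fact (S n)).
Proof.
  unfold alc. assert (E := poch_shift (- s) n). replace (- s + 1) with (1 - s) in E by ring.
  change (poch (- s) (S n)) with (poch (- s) n * (- s + INR n)).
  rewrite <- E. assert (0 < INR (fact (S n))) by apply fact_pos. field. lra.
Qed.

Lemma rho_formula a b c n : 0 < a -> 0 < b -> a + b < c -> c < a + b + 1 ->
  rho a b c n = Q_abc a b c *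
    (Gamma (INR n + (a + 1)) * Gamma (INR n + (b + 1)) /
     (Gamma (INR n + (c + 1)) * Gamma (INR n + (1 - (c - a - b))))).
Proof.
  intros Ha Hb Hc1 Hc2. unfold rho, Q_abc.
  rewrite malc_S. unfold Acoef.
  set (s := c - a - b).
  assert (0 <= INR n) by apply pos_INR.
  rewrite !(poch_Gamma _ (S n)) by lra. rewrite (poch_Gamma (1 - s)) by (unfold s; lra).
  rewrite S_INR.
  replace (a + (INR n + 1)) with (INR n + (a + 1)) by ring.
  replace (b + (INR n + 1)) with (INR n + (b + 1)) by ring.
  replace (c + (INR n + 1)) with (INR n + (c + 1)) by ring.
  replace (1 - s + INR n) with (INR n + (1 - s)) by ring.
  replace (a + b + 1 - c) with (1 - s) by (unfold s; ring).
  assert (0 < Gamma a) by (apply Gamma_pos; lra). assert (0 < Gamma b) by (apply Gamma_pos; lra).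
  assert (0 < Gamma c) by (apply Gamma_pos; lra). assert (0 < Gamma (1 - s)) by (apply Gamma_pos; unfold s; lra).
  assert (0 < Gamma (INR n + (a + 1))) by (apply Gamma_pos; lra).
  assert (0 < Gamma (INR n + (b + 1))) by (apply Gamma_pos; lra).
  assert (0 < Gamma (INR n + (c + 1))) by (apply Gamma_pos; lra).
  assert (0 < Gamma (INR n + (1 - s))) by (apply Gamma_pos; unfold s; lra).
  assert (0 < INR (fact (S n))) by apply fact_pos.
  assert (0 < s) by (unfold s; lra).
  field. repeat split; lra.
Qed.

Lemma rho_lim a b c : 0 < a -> 0 < b -> a + b < c -> c < a + b + 1 ->
  is_lim_seq (rho a b c) (Q_abc a b c).
Proof.
  intros Ha Hb Hc1 Hc2.
  assert (H := Gamma_ratio_lim (a + 1) (b + 1) (c + 1) (1 - (c - a - b)) ltac:(lra) ltac:(lra) ltac:(lra) ltac:(lra) ltac:(ring)).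
  assert (H2 := is_lim_seq_scal_l _ (Q_abc a b c) _ H).
  simpl in H2. rewrite Rmult_1_r in H2.
  eapply is_lim_seq_ext; [|exact H2]. intros n. simpl. rewrite rho_formula; auto.
Qed.

Lemma rho_S a b c n : 0 < a -> 0 < b -> a + b < c -> c < a + b + 1 ->
  rho a b c (S n) = rho a b c n * ((a + INR (S n)) * (b + INR (S n))) / ((c + INR (S n)) * (INR (S n) - (c - a - b))).
Proof.
  intros Ha Hb Hc1 Hc2. unfold rho.
  rewrite (A_S a b c (S n)) by lra.
  rewrite (alc_S _ (S n)).
  assert (H1 := alc_neg (c - a - b) n ltac:(lra)).
  assert (H2 := A_pos a b c (S n) Ha Hb ltac:(lra)).
  assert (0 <= INR (S n)) by apply pos_INR.
  assert (1 <= INR (S n)) by (rewrite S_INR; assert (0 <= INR n) by apply pos_INR; lra).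
  field. repeat split; lra.
Qed.

Lemma rho_incr a b c n : 0 < a -> 0 < b -> a + b < c -> c < a + b + 1 ->
  rho a b c n < rho a b c (S n).
Proof.
  intros Ha Hb Hc1 Hc2. rewrite rho_S by auto.
  assert (Hr : 0 < rho a b c n).
  { unfold rho. apply Rdiv_lt_0_compat. apply A_pos; lra.
    assert (H1 := alc_neg (c - a - b) n ltac:(lra)). lra. }
  set (m := INR (S n)).
  assert (1 <= m) by (unfold m; rewrite S_INR; assert (0 <= INR n) by apply pos_INR; lra).
  assert (Hd : 0 < (c + m) * (m - (c - a - b))) by (apply Rmult_lt_0_compat; lra).
  apply Rmult_lt_reg_r with (r := (c + m) * (m - (c - a - b))); auto.
  replace (rho a b c n * ((a + m) * (b + m)) / ((c + m) * (m - (c - a - b))) * ((c + m) * (m - (c - a - b))))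
    with (rho a b c n * ((a + m) * (b + m))) by (field; lra).
  apply Rmult_lt_compat_l; auto. nra.
Qed.

Lemma rho_mono a b c n m : 0 < a -> 0 < b -> a + b < c -> c < a + b + 1 ->
  (n <= m)%nat -> rho a b c n <= rho a b c m.
Proof.
  intros Ha Hb Hc1 Hc2 Hnm. induction Hnm. lra.
  eapply Rle_trans; [exact IHHnm|]. left; apply rho_incr; auto.
Qed.

Lemma rho_lt_Q a b c n : 0 < a -> 0 < b -> a + b < c -> c < a + b + 1 ->
  rho a b c n < Q_abc a b c.
Proof.
  intros Ha Hb Hc1 Hc2.
  apply Rlt_le_trans with (rho a b c (S n)). apply rho_incr; auto.
  assert (H := rho_lim a b c Ha Hb Hc1 Hc2).
  apply (is_lim_seq_incr_n _ (S n)) in H.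
  assert (Hl := is_lim_seq_le (fun _ => rho a b c (S n)) _ _ _ (fun m => rho_mono a b c (S n) (m + S n) Ha Hb Hc1 Hc2 ltac:(lia))
                 (is_lim_seq_const _) H).
  simpl in Hl. exact Hl.
Qed.

Lemma A_lt_Q a b c n : 0 < a -> 0 < b -> a + b < c -> c < a + b + 1 ->
  Acoef a b c (S n) < Q_abc a b c * (- alc (c - a - b) (S n)).
Proof.
  intros Ha Hb Hc1 Hc2. assert (H := rho_lt_Q a b c n Ha Hb Hc1 Hc2).
  unfold rho in H. assert (H1 := alc_neg (c - a - b) n ltac:(lra)).
  apply Rmult_lt_compat_r with (r := - alc (c - a - b) (S n)) in H; [|lra].
  replace (Acoef a b c (S n) / - alc (c - a - b) (S n) * - alc (c - a - b) (S n)) with (Acoef a b c (S n)) in H by (field; lra).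
  exact H.
Qed.

Lemma sum_n_nonneg (u : nat -> R) N : (forall n, 0 <= u n) -> 0 <= sum_n u N.
Proof.
  intros H. induction N. rewrite sum_O; auto.
  rewrite sum_Sn. unfold plus; simpl. specialize (H (S N)). lra.
Qed.

Lemma sum_n_ge_term (u : nat -> R) N : (forall n, 0 <= u n) -> u N <= sum_n u N.
Proof.
  intros H. destruct N. rewrite sum_O; lra.
  rewrite sum_Sn. unfold plus; simpl. assert (0 <= sum_n u N) by (apply sum_n_nonneg; auto). lra.
Qed.

Lemma sum_n_mono (u : nat -> R) N m : (forall n, 0 <= u n) -> sum_n u N <= sum_n u (m + N).
Proof.
  intros H. induction m. simpl; lra.
  simpl. rewrite sum_Sn. unfold plus; simpl. specialize (H (S (m + N))). lra.
Qed.

Lemma series_ge_partial (u : nat -> R) l N : is_series u l -> (forall n, 0 <= u n) -> sum_n u N <= l.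
Proof.
  intros Hs H.
  assert (Hl : is_lim_seq (sum_n u) l) by exact Hs.
  apply (is_lim_seq_incr_n _ N) in Hl.
  assert (Hle := is_lim_seq_le (fun _ => sum_n u N) _ _ _ (fun m => sum_n_mono u N m H) (is_lim_seq_const _) Hl).
  simpl in Hle. exact Hle.
Qed.

Lemma series_pos (u : nat -> R) l k : is_series u l -> (forall n, 0 <= u n) -> 0 < u k -> 0 < l.
Proof.
  intros Hs H Hk. assert (H1 := series_ge_partial u l k Hs H).
  assert (H2 := sum_n_ge_term u k H). lra.
Qed.

Lemma series_nonneg (u : nat -> R) l : is_series u l -> (forall n, 0 <= u n) -> 0 <= l.
Proof.
  intros Hs H. assert (H1 := series_ge_partial u l 0 Hs H). rewrite sum_O in H1.
  specialize (H 0%nat). lra.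
Qed.

Lemma is_series_R_lim (u : nat -> R) l : is_series u l <-> is_lim_seq (sum_n u) l.
Proof. split; intros H; exact H. Qed.

Lemma ex_series_le_R (u v : nat -> R) : (forall n, Rabs (u n) <= v n) -> ex_series v -> ex_series u.
Proof. intros H Hv. apply (ex_series_le (V:=R_CompleteNormedModule) u v); auto. Qed.

Lemma poch_mono x y n : 0 < x <= y -> poch x n <= poch y n.
Proof.
  intros H. induction n. simpl; lra.
  change (poch x (S n)) with (poch x n * (x + INR n)).
  change (poch y (S n)) with (poch y n * (y + INR n)).
  assert (0 < poch x n) by (apply poch_pos; lra). assert (0 <= INR n) by apply pos_INR.
  apply Rmult_le_compat; lra.
Qed.

Lemma A_mono_c a b c1 c2 n : 0 < a -> 0 < b -> 0 < c1 <= c2 -> Acoef a b c2 n <= Acoef a b c1 n.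
Proof.
  intros Ha Hb Hc. unfold Acoef.
  assert (H1 := poch_mono c1 c2 n Hc).
  assert (0 < poch c1 n) by (apply poch_pos; lra).
  assert (0 < INR (fact n)) by apply fact_pos.
  assert (0 < poch a n * poch b n) by (apply Rmult_lt_0_compat; apply poch_pos; lra).
  apply Rmult_le_compat_l; [lra|]. apply Rinv_le_contravar. nra.
  apply Rmult_le_compat_r; lra.
Qed.

Lemma A_shift_bound a b c m n : 0 < a -> 0 < b -> 0 < c ->
  Acoef a b (c + INR m) (S n) <= Acoef a b c (S n) * (c / (c + INR m)).
Proof.
  intros Ha Hb Hc. unfold Acoef.
  assert (0 <= INR m) by apply pos_INR.
  assert (E1 := poch_shift c n). assert (E2 := poch_shift (c + INR m) n).
  change (poch c (S n)) with (poch c n * (c + INR n)).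
  change (poch (c + INR m) (S n)) with (poch (c + INR m) n * (c + INR m + INR n)).
  rewrite <- E1, <- E2.
  assert (H1 := poch_mono (c + 1) (c + INR m + 1) n ltac:(lra)).
  assert (0 < poch (c + 1) n) by (apply poch_pos; lra).
  assert (0 < INR (fact (S n))) by apply fact_pos.
  assert (0 < poch a (S n) * poch b (S n)) by (apply Rmult_lt_0_compat; apply poch_pos; lra).
  set (N := poch a (S n) * poch b (S n)) in *. set (F := INR (fact (S n))) in *. clearbody N F.
  replace (N / (c * poch (c + 1) n * F) * (c / (c + INR m))) with (N / ((c + INR m) * poch (c + 1) n * F)) by (field; repeat split; lra).
  apply Rmult_le_compat_l; [lra|]. apply Rinv_le_contravar.
  repeat apply Rmult_lt_0_compat; lra.
  apply Rmult_le_compat_r; [lra|]. apply Rmult_le_compat_l; lra.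
Qed.

Lemma A_c1 a b c n : 0 < c -> Acoef a b (c + 1) n = Acoef a b c n * c / (c + INR n).
Proof.
  intros Hc. unfold Acoef. assert (E := poch_shift c n).
  assert (0 < poch c n) by (apply poch_pos; lra). assert (0 <= INR n) by apply pos_INR.
  assert (0 < INR (fact n)) by apply fact_pos.
  assert (0 < poch (c + 1) n) by (apply poch_pos; lra).
  replace (poch (c + 1) n) with (poch c n * (c + INR n) / c) by (rewrite <- E; field; lra).
  field. repeat split; lra.
Qed.

Lemma contig_partial a b c N : 0 < c ->
  c * (c - a - b) * sum_n (Acoef a b c) N - (c - a) * (c - b) * sum_n (Acoef a b (c + 1)) N
  = - c * (INR N + 1) * Acoef a b c (S N).
Proof.
  intros Hc. induction N.
  - rewrite !sum_O. rewrite !A_0. rewrite A_S by auto. rewrite A_0. simpl. field. lra.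
  - rewrite S_INR. rewrite (sum_Sn (Acoef a b c)), (sum_Sn (Acoef a b (c + 1))). unfold plus; simpl.
    replace (c * (c - a - b) * (sum_n (Acoef a b c) N + Acoef a b c (S N)) -
             (c - a) * (c - b) * (sum_n (Acoef a b (c + 1)) N + Acoef a b (c + 1) (S N)))
      with ((c * (c - a - b) * sum_n (Acoef a b c) N - (c - a) * (c - b) * sum_n (Acoef a b (c + 1)) N)
            + (c * (c - a - b) * Acoef a b c (S N) - (c - a) * (c - b) * Acoef a b (c + 1) (S N))) by ring.
    rewrite IHN. rewrite (A_c1 a b c (S N)) by auto. rewrite (A_S a b c (S N)) by auto.
    assert (0 <= INR N) by apply pos_INR.
    rewrite S_INR. field. lra.
Qed.

Lemma contig a b c S1 S2 : 0 < c ->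
  is_series (Acoef a b c) S1 -> is_series (Acoef a b (c + 1)) S2 ->
  is_lim_seq (fun N => (INR N + 1) * Acoef a b c (S N)) 0 ->
  c * (c - a - b) * S1 = (c - a) * (c - b) * S2.
Proof.
  intros Hc H1 H2 H3.
  assert (H1' : is_lim_seq (sum_n (Acoef a b c)) S1) by exact H1. clear H1; rename H1' into H1.
  assert (H2' : is_lim_seq (sum_n (Acoef a b (c + 1))) S2) by exact H2. clear H2; rename H2' into H2.
  assert (L1 := is_lim_seq_plus' _ _ _ _ (is_lim_seq_scal_l _ (c * (c - a - b)) _ H1)
                   (is_lim_seq_scal_l _ (- ((c - a) * (c - b))) _ H2)).
  assert (L2 := is_lim_seq_scal_l _ (- c) _ H3).
  simpl in L1, L2.
  assert (E : forall N, c * (c - a - b) * sum_n (Acoef a b c) N + - ((c - a) * (c - b)) * sum_n (Acoef a b (c + 1)) N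
                 = - c * ((INR N + 1) * Acoef a b c (S N))).
  { intros N. rewrite <- Rmult_assoc, <- contig_partial by auto. ring. }
  assert (L3 := is_lim_seq_ext _ _ _ E L1).
  assert (U := is_lim_seq_unique _ _ L3). rewrite (is_lim_seq_unique _ _ L2) in U.
  injection U. intros. lra.
Qed.

Lemma ex_series_S (u : nat -> R) : ex_series u -> ex_series (fun n => u (S n)).
Proof. intros H. exact (proj1 (ex_series_incr_1 (K:=R_AbsRing) (V:=R_NormedModule) u) H). Qed.

Lemma ex_series_unS (u : nat -> R) : ex_series (fun n => u (S n)) -> ex_series u.
Proof. intros H. exact (proj2 (ex_series_incr_1 (K:=R_AbsRing) (V:=R_NormedModule) u) H). Qed.

Lemma alc_shift_series s : 0 < s < 1 -> is_series (fun k => alc s (S k)) (- 1).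
Proof.
  intros Hs. apply (is_series_incr_1 (K:=R_AbsRing) (V:=R_NormedModule)).
  match goal with |- is_series _ ?l => replace l with 0 end. apply alc_series; auto.
  unfold alc; simpl. unfold plus; simpl. field.
Qed.

Lemma exA a b c : 0 < a -> 0 < b -> a + b < c -> c < a + b + 1 -> ex_series (Acoef a b c).
Proof.
  intros Ha Hb Hc1 Hc2.
  apply ex_series_unS.
  apply ex_series_le_R with (v := fun n => Q_abc a b c * - alc (c - a - b) (S n)).
  - intros n. rewrite Rabs_right by (left; apply A_pos; lra). left. apply A_lt_Q; auto.
  - assert (H := is_series_scal_l (K:=R_AbsRing) (V:=R_NormedModule) (- Q_abc a b c) _ _ (alc_shift_series (c - a - b) ltac:(lra))).
    eexists. eapply is_series_ext; [|exact H]. intros n. unfold scal; simpl; unfold mult; simpl. ring.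
Qed.

Lemma exA_shift a b c k : 0 < a -> 0 < b -> a + b < c -> c < a + b + 1 -> ex_series (Acoef a b (c + INR k)).
Proof.
  intros Ha Hb Hc1 Hc2. assert (0 <= INR k) by apply pos_INR.
  apply ex_series_le_R with (v := Acoef a b c).
  - intros n. rewrite Rabs_right by (left; apply A_pos; lra). apply A_mono_c; lra.
  - apply exA; auto.
Qed.

Lemma decay a b c k : 0 < a -> 0 < b -> a + b < c -> c < a + b + 1 ->
  is_lim_seq (fun N => (INR N + 1) * Acoef a b (c + INR k) (S N)) 0.
Proof.
  intros Ha Hb Hc1 Hc2. assert (0 <= INR k) by apply pos_INR.
  set (s := c - a - b).
  apply is_lim_seq_le_le with (u := fun _ => 0)
    (w := fun N => (Q_abc a b c * s) * (poch (1 - s) N / INR (fact N))).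
  - intros N. assert (0 <= INR N) by apply pos_INR. split.
    + left. apply Rmult_lt_0_compat. lra. apply A_pos; lra.
    + apply Rle_trans with ((INR N + 1) * Acoef a b c (S N)).
      { apply Rmult_le_compat_l. lra. apply A_mono_c; lra. }
      apply Rle_trans with ((INR N + 1) * (Q_abc a b c * - alc s (S N))).
      { apply Rmult_le_compat_l. lra. left; apply A_lt_Q; auto. }
      rewrite malc_S, INR_fact_S. right. assert (0 < INR (fact N)) by apply fact_pos. field. lra.
  - apply is_lim_seq_const.
  - replace 0 with ((Q_abc a b c * s) * 0) by ring.
    apply (is_lim_seq_scal_l _ _ (Finite 0)). apply gamma_seq_lim. unfold s; lra.
Qed.

Lemma Series_A_step a b c k : 0 < a -> 0 < b -> a + b < c -> c < a + b + 1 ->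
  Series (Acoef a b (c + INR k)) =
  (c + INR k - a) * (c + INR k - b) / ((c + INR k) * (c + INR k - a - b)) * Series (Acoef a b (c + INR (S k))).
Proof.
  intros Ha Hb Hc1 Hc2. assert (0 <= INR k) by apply pos_INR.
  assert (E : c + INR (S k) = c + INR k + 1) by (rewrite S_INR; ring).
  assert (HS2 := Series_correct _ (exA_shift a b c (S k) Ha Hb Hc1 Hc2)). rewrite E in HS2.
  assert (Hc := contig a b (c + INR k) _ _ ltac:(lra) (Series_correct _ (exA_shift a b c k Ha Hb Hc1 Hc2))
     HS2 (decay a b c k Ha Hb Hc1 Hc2)).
  rewrite E.
  apply Rmult_eq_reg_l with ((c + INR k) * (c + INR k - a - b)).
  2: apply Rgt_not_eq; apply Rmult_lt_0_compat; lra.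
  rewrite Hc. field. split; lra.
Qed.

Definition Tk (a b c : R) (k : nat) : R :=
  poch (c - a) k * poch (c - b) k / (poch c k * poch (c - a - b) k).

Lemma Series_A_iter a b c k : 0 < a -> 0 < b -> a + b < c -> c < a + b + 1 ->
  Series (Acoef a b c) = Tk a b c k * Series (Acoef a b (c + INR k)).
Proof.
  intros Ha Hb Hc1 Hc2. induction k.
  - unfold Tk. simpl. rewrite Rplus_0_r. field.
  - rewrite IHk, Series_A_step by auto. unfold Tk.
    change (poch (c - a) (S k)) with (poch (c - a) k * (c - a + INR k)).
    change (poch (c - b) (S k)) with (poch (c - b) k * (c - b + INR k)).
    change (poch c (S k)) with (poch c k * (c + INR k)).
    change (poch (c - a - b) (S k)) with (poch (c - a - b) k * (c - a - b + INR k)).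
    assert (0 <= INR k) by apply pos_INR.
    assert (0 < poch c k) by (apply poch_pos; lra).
    assert (0 < poch (c - a - b) k) by (apply poch_pos; lra).
    field. repeat split; lra.
Qed.

Lemma Tk_formula a b c k : 0 < a -> 0 < b -> a + b < c -> c < a + b + 1 ->
  Tk a b c k = P_abc a b c *
    (Gamma (INR k + (c - a)) * Gamma (INR k + (c - b)) / (Gamma (INR k + c) * Gamma (INR k + (c - a - b)))).
Proof.
  intros Ha Hb Hc1 Hc2. unfold Tk, P_abc.
  assert (0 <= INR k) by apply pos_INR.
  rewrite !poch_Gamma by lra.
  replace (c - a + INR k) with (INR k + (c - a)) by ring.
  replace (c - b + INR k) with (INR k + (c - b)) by ring.
  replace (c + INR k) with (INR k + c) by ring.
  replace (c - a - b + INR k) with (INR k + (c - a - b)) by ring.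
  assert (0 < Gamma (c - a)) by (apply Gamma_pos; lra).
  assert (0 < Gamma (c - b)) by (apply Gamma_pos; lra).
  assert (0 < Gamma c) by (apply Gamma_pos; lra).
  assert (0 < Gamma (c - a - b)) by (apply Gamma_pos; lra).
  assert (0 < Gamma (INR k + (c - a))) by (apply Gamma_pos; lra).
  assert (0 < Gamma (INR k + (c - b))) by (apply Gamma_pos; lra).
  assert (0 < Gamma (INR k + c)) by (apply Gamma_pos; lra).
  assert (0 < Gamma (INR k + (c - a - b))) by (apply Gamma_pos; lra).
  field. repeat split; lra.
Qed.

Lemma Series_shift_lim a b c : 0 < a -> 0 < b -> a + b < c -> c < a + b + 1 ->
  is_lim_seq (fun k => Series (Acoef a b (c + INR k))) 1.
Proof.
  intros Ha Hb Hc1 Hc2.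
  set (S0 := Series (fun n => Acoef a b c (S n))).
  assert (HS0 : 0 <= S0).
  { unfold S0. apply series_nonneg with (u := fun n => Acoef a b c (S n)).
    apply Series_correct. apply ex_series_S. apply exA; auto.
    intros n; left; apply A_pos; lra. }
  apply is_lim_seq_le_le with (u := fun _ => 1) (w := fun k => 1 + S0 * (c * / (INR k + c))).
  - intros k. assert (0 <= INR k) by apply pos_INR.
    assert (Hex := exA_shift a b c k Ha Hb Hc1 Hc2).
    rewrite Series_incr_1 by auto. rewrite A_0.
    assert (Hex' : ex_series (fun n => Acoef a b (c + INR k) (S n)))
      by (apply ex_series_S; auto).
    split.
    + assert (0 <= Series (fun n => Acoef a b (c + INR k) (S n))); [|lra].
      apply series_nonneg with (u := fun n => Acoef a b (c + INR k) (S n)).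
      apply Series_correct; auto. intros n; left; apply A_pos; lra.
    + apply Rplus_le_compat_l.
      apply Rle_trans with (Series (fun n => (c / (c + INR k)) * Acoef a b c (S n))).
      * apply Series_le.
        intros n. split. left; apply A_pos; lra.
        rewrite Rmult_comm. apply A_shift_bound; lra.
        apply (ex_series_scal_l (K:=R_AbsRing) (V:=R_NormedModule)).
        apply ex_series_S. apply exA; auto.
      * rewrite Series_scal_l. fold S0. right. unfold Rdiv. rewrite Rplus_comm. ring.
  - apply is_lim_seq_const.
  - replace (Finite 1) with (Finite (1 + S0 * (c * 0))) by (f_equal; ring).
    apply is_lim_seq_plus'. apply is_lim_seq_const.
    apply is_lim_seq_scal_l with (lu := Finite (c * 0)).
    apply is_lim_seq_scal_l with (lu := Finite 0).
    replace (Finite 0) with (Rbar_inv p_infty) by reflexivity.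
    apply is_lim_seq_inv. apply lim_lin_inf. discriminate.
Qed.

Lemma gauss a b c : 0 < a -> 0 < b -> a + b < c -> c < a + b + 1 ->
  is_series (Acoef a b c) (P_abc a b c).
Proof.
  intros Ha Hb Hc1 Hc2.
  assert (Hex := exA a b c Ha Hb Hc1 Hc2).
  replace (P_abc a b c) with (Series (Acoef a b c)). apply Series_correct; auto.
  assert (L := is_lim_seq_mult' _ _ _ _
      (is_lim_seq_scal_l _ (P_abc a b c) _ (Gamma_ratio_lim (c - a) (c - b) c (c - a - b) ltac:(lra) ltac:(lra) ltac:(lra) ltac:(lra) ltac:(ring)))
      (Series_shift_lim a b c Ha Hb Hc1 Hc2)).
  simpl in L.
  assert (L2 : is_lim_seq (fun k => Series (Acoef a b c)) (P_abc a b c * 1 * 1)).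
  { eapply is_lim_seq_ext; [|exact L]. intros k. simpl.
    rewrite (Series_A_iter a b c k) by auto. rewrite Tk_formula by auto. reflexivity. }
  assert (U := is_lim_seq_unique _ _ L2). rewrite Lim_seq_const in U.
  injection U. intros; lra.
Qed.

Lemma alc_bound s n : 0 < s < 1 -> Rabs (alc s n) <= 1.
Proof.
  intros Hs. induction n.
  - unfold alc; simpl. rewrite Rabs_right; lra.
  - rewrite alc_S. assert (0 <= INR n) by apply pos_INR.
    unfold Rdiv. rewrite !Rabs_mult. rewrite (Rabs_right (/ (INR n + 1))) by (left; apply Rinv_0_lt_compat; lra).
    assert (Rabs (INR n - s) <= INR n + 1) by (apply Rabs_le; lra).
    assert (0 < / (INR n + 1)) by (apply Rinv_0_lt_compat; lra).
    assert (Rabs (INR n - s) * / (INR n + 1) <= 1).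
    { apply Rmult_le_reg_r with (INR n + 1). lra.
      replace (Rabs (INR n - s) * / (INR n + 1) * (INR n + 1)) with (Rabs (INR n - s)) by (field; lra). lra. }
    assert (0 <= Rabs (alc s n)) by apply Rabs_pos.
    assert (0 <= Rabs (INR n - s)) by apply Rabs_pos.
    nra.
Qed.

Lemma pow_le_one x n : 0 <= x <= 1 -> x ^ n <= 1.
Proof.
  intros Hx. induction n; simpl. lra.
  assert (0 <= x ^ n) by (apply pow_le; lra). nra.
Qed.

Lemma alc_radius s x : 0 < s < 1 -> Rabs x < 1 -> Rbar_lt (Rabs x) (CV_radius (alc s)).
Proof.
  intros Hs Hx. set (r := (Rabs x + 1) / 2).
  assert (Hr : Rbar_le r (CV_radius (alc s))).
  { destruct (CV_radius_bounded (alc s)) as [Hub _]. apply Hub.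
    exists 1. intros n. rewrite Rabs_mult, <- RPow_abs.
    assert (0 <= Rabs r ^ n <= 1).
    { split. apply pow_le, Rabs_pos. apply pow_le_one. split. apply Rabs_pos.
      assert (0 <= Rabs x) by apply Rabs_pos. unfold r. rewrite Rabs_right; lra. }
    assert (H1 := alc_bound s n Hs). assert (0 <= Rabs (alc s n)) by apply Rabs_pos. nra. }
  destruct (CV_radius (alc s)) as [R| |]; simpl in *; auto.
  unfold r in Hr. lra.
Qed.

Lemma PS_derive_alc s n : PS_derive (alc s) n = (INR n - s) * alc s n.
Proof.
  unfold PS_derive. rewrite alc_S, S_INR. assert (0 <= INR n) by apply pos_INR. field. lra.
Qed.

Lemma binom_ode s x : 0 < s < 1 -> Rabs x < 1 ->
  (1 - x) * PSeries (PS_derive (alc s)) x = - s * PSeries (alc s) x.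
Proof.
  intros Hs Hx.
  assert (Hr := alc_radius s x Hs Hx).
  assert (Hr' : Rbar_lt (Rabs x) (CV_radius (PS_derive (alc s)))) by (rewrite CV_radius_derive; auto).
  assert (F := PSeries_correct _ _ (CV_radius_inside _ _ Hr)).
  assert (D := PSeries_correct _ _ (CV_radius_inside _ _ Hr')).
  apply is_pseries_R in F. apply is_pseries_R in D.
  set (f := PSeries (alc s) x) in *. set (d := PSeries (PS_derive (alc s)) x) in *.
  assert (E1 : is_series (fun n => INR n * alc s n * x ^ n) (d + s * f)).
  { assert (H := is_series_plus (K:=R_AbsRing) (V:=R_NormedModule) _ _ _ _ D
                   (is_series_scal_l (K:=R_AbsRing) (V:=R_NormedModule) s _ _ F)).
    eapply is_series_ext; [|exact H]. intros n. unfold plus, scal; simpl; unfold mult; simpl.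
    rewrite PS_derive_alc. ring. }
  assert (E2 : is_series (fun n => INR n * alc s n * x ^ n) (x * d)).
  { apply (is_series_decr_n (K:=R_AbsRing) (V:=R_NormedModule) _ 1%nat). lia.
    simpl. rewrite sum_O. simpl.
    match goal with |- is_series _ ?l => replace l with (x * d) by (unfold plus, opp; simpl; ring) end.
    assert (H := is_series_scal_l (K:=R_AbsRing) (V:=R_NormedModule) x _ _ D).
    eapply is_series_ext; [|exact H]. intros n. unfold scal; simpl; unfold mult; simpl.
    unfold PS_derive. change (1 + n)%nat with (S n). rewrite S_INR. change (x ^ S n) with (x * x ^ n). change (match n with | 0%nat => 1 | S _ => INR n + 1 end) with (INR (S n)). rewrite S_INR. ring. }
  assert (U := is_series_unique _ _ E1). rewrite (is_series_unique _ _ E2) in U.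
  lra.
Qed.

Lemma binom_series s w : 0 < s < 1 -> 0 <= w < 1 ->
  is_series (fun n => alc s n * w ^ n) (Rpower (1 - w) s).
Proof.
  intros Hs Hw.
  set (g := fun x => PSeries (alc s) x * Rpower (1 - x) (- s)).
  assert (Hd : forall x, 0 <= x <= w -> derivable_pt_lim g x 0).
  { intros x Hx. apply is_derive_Reals.
    assert (Hx1 : Rabs x < 1) by (rewrite Rabs_right; lra).
    assert (Hr := alc_radius s x Hs Hx1).
    assert (HD := is_derive_PSeries _ _ Hr).
    unfold g.
    assert (HR : is_derive (fun x => Rpower (1 - x) (- s)) x (s * Rpower (1 - x) (- s) / (1 - x))).
    { unfold Rpower. auto_derive. lra. replace (1 + - x) with (1 - x) by ring. field. lra. }
    assert (HG := is_derive_mult _ _ _ _ _ HD HR (fun n m => Rmult_comm n m)).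
    match type of HG with is_derive _ _ ?l => replace 0 with l; [exact HG|] end.
    assert (O := binom_ode s x Hs Hx1).
    unfold plus, mult; simpl.
    replace (PSeries (PS_derive (alc s)) x) with (- s * PSeries (alc s) x / (1 - x)) by (rewrite <- O; field; lra).
    field. lra. }
  assert (Hgw : g w = g 0).
  { destruct (Req_dec w 0) as [->|Hw0]. reflexivity.
    destruct (MVT_cor2 g (fun _ => 0) 0 w) as [c [Hc _]]. lra.
    intros c Hc. apply Hd; lra. lra. }
  assert (Hg0 : g 0 = 1).
  { unfold g. rewrite PSeries_0. unfold alc; simpl. rewrite Rminus_0_r.
    unfold Rpower. rewrite ln_1, Rmult_0_r, exp_0. field. }
  assert (Hw1 : Rabs w < 1) by (rewrite Rabs_right; lra).
  assert (F := PSeries_correct _ _ (CV_radius_inside _ _ (alc_radius s w Hs Hw1))).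
  apply is_pseries_R in F.
  replace (Rpower (1 - w) s) with (PSeries (alc s) w); auto.
  rewrite Hg0 in Hgw. unfold g in Hgw. rewrite Rpower_Ropp in Hgw.
  assert (0 < Rpower (1 - w) s) by (unfold Rpower; apply exp_pos).
  apply Rmult_eq_reg_r with (/ Rpower (1 - w) s).
  rewrite Hgw. field. lra.
  apply Rgt_not_eq, Rinv_0_lt_compat; lra.
Qed.

Lemma is_series_plus_R (u v : nat -> R) (lu lv : R) : is_series u lu -> is_series v lv ->
  is_series (fun n => u n + v n) (lu + lv).
Proof. intros H1 H2. exact (is_series_plus (K:=R_AbsRing) (V:=R_NormedModule) u v lu lv H1 H2). Qed.

Lemma is_series_scal_R (c : R) (u : nat -> R) (l : R) : is_series u l -> is_series (fun n => c * u n) (c * l).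
Proof. intros H. exact (is_series_scal_l (K:=R_AbsRing) (V:=R_NormedModule) c u l H). Qed.

Lemma is_series_shift_R (u : nat -> R) (l : R) : is_series u l -> is_series (fun k => u (S k)) (l - u 0%nat).
Proof.
  intros H. apply (is_series_incr_1 (K:=R_AbsRing) (V:=R_NormedModule)).
  match goal with |- is_series _ ?m => replace m with l; auto end.
  unfold plus; simpl. ring.
Qed.

Lemma is_series_ext_R (u v : nat -> R) (l l' : R) : (forall n, u n = v n) -> l = l' -> is_series u l -> is_series v l'.
Proof. intros H1 H2 H3. rewrite <- H2. exact (is_series_ext (K:=R_AbsRing) (V:=R_NormedModule) u v l H1 H3). Qed.

Lemma pow_anti w i j : 0 < w < 1 -> (i <= j)%nat -> w ^ j <= w ^ i.
Proof.
  intros Hw Hij. replace j with (i + (j - i))%nat by lia. rewrite pow_add.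
  assert (0 < w ^ i) by (apply pow_lt; lra).
  assert (w ^ (j - i) <= 1) by (apply pow_le_one; lra). nra.
Qed.

Lemma pow_anti_strict w i j : 0 < w < 1 -> (i < j)%nat -> w ^ j < w ^ i.
Proof.
  intros Hw Hij. replace j with (i + S (j - S i))%nat by lia. rewrite pow_add.
  assert (0 < w ^ i) by (apply pow_lt; lra).
  assert (w ^ (j - S i) <= 1) by (apply pow_le_one; lra).
  assert (0 <= w ^ (j - S i)) by (apply pow_le; lra).
  assert (w * w ^ (j - S i) < 1) by nra. simpl. nra.
Qed.

Lemma least_nat (P : nat -> Prop) : (exists n, P n) -> exists m, P m /\ forall k, (k < m)%nat -> ~ P k.
Proof.
  intros [n Hn].
  assert (H : forall N, forall n, (n <= N)%nat -> P n -> exists m, P m /\ forall k, (k < m)%nat -> ~ P k).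
  { induction N; intros n0 Hn0 HP.
    - exists n0. split; auto. intros k Hk. lia.
    - destruct (Nat.le_gt_cases n0 N) as [Hle|Hgt]. apply (IHN n0); auto.
      destruct (classic (exists k, (k <= N)%nat /\ P k)) as [[k [Hk1 Hk2]]|Hno].
      + apply (IHN k); auto.
      + exists n0. split; auto. intros k Hk HPk. apply Hno. exists k. split; auto. lia. }
  apply (H n n); auto.
Qed.

Lemma A_rho a b c k : 0 < a -> 0 < b -> a + b < c -> c < a + b + 1 ->
  Acoef a b c (S k) = rho a b c k * (- alc (c - a - b) (S k)).
Proof.
  intros. unfold rho. assert (H3 := alc_neg (c - a - b) k ltac:(lra)). field. lra.
Qed.

Theorem lemma5p2 (a b c w : R) :
  0 < a -> 0 < b -> a + b < c -> c < a + b + 1 -> 0 < w < 1 ->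
  0 < P_abc a b c - 1 /\
  P_abc a b c - 1 < (P_abc a b c - hyp2F1 a b c w) / Rpower (1 - w) (c - a - b) /\
  (P_abc a b c - hyp2F1 a b c w) / Rpower (1 - w) (c - a - b) < Q_abc a b c.
Proof.
  intros Ha Hb Hc1 Hc2 Hw.
  assert (Hs : 0 < c - a - b < 1) by lra.
  assert (HP := gauss a b c Ha Hb Hc1 Hc2).
  assert (HF : is_series (fun n => Acoef a b c n * w ^ n) (hyp2F1 a b c w)).
  { change (hyp2F1 a b c w) with (Series (fun n => Acoef a b c n * w ^ n)).
    apply Series_correct. apply ex_series_le_R with (v := Acoef a b c).
    - intros n. assert (0 < Acoef a b c n) by (apply A_pos; lra).
      assert (0 < w ^ n) by (apply pow_lt; lra). assert (w ^ n <= 1) by (apply pow_le_one; lra).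
      rewrite Rabs_right by nra. nra.
    - apply exA; auto. }
  assert (HY := binom_series (c - a - b) w Hs ltac:(lra)).
  assert (HZ := alc_series (c - a - b) Hs).
  set (P := P_abc a b c) in *. set (Q := Q_abc a b c) in *.
  set (F := hyp2F1 a b c w) in *. set (Y := Rpower (1 - w) (c - a - b)) in *.
  assert (HYp : 0 < Y) by (unfold Y, Rpower; apply exp_pos).
  assert (Hneg : forall k, alc (c - a - b) (S k) < 0) by (intros; apply alc_neg; lra).
  assert (HAQ : forall k, Acoef a b c (S k) < Q * - alc (c - a - b) (S k)) by (intros; apply A_lt_Q; auto).
  assert (HApos : forall n, 0 < Acoef a b c n) by (intros; apply A_pos; lra).
  assert (HA1 : is_series (fun k => Acoef a b c (S k)) (P - 1)).
  { assert (H := is_series_shift_R _ _ HP). rewrite A_0 in H. exact H. }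
  assert (HP1 : 0 < P - 1).
  { apply (series_pos _ _ 0 HA1). intros; left; auto. auto. }
  split; [exact HP1|]. split.
  -
    set (tau := P - 1).
    assert (HF1 : is_series (fun k => Acoef a b c (S k) * w ^ (S k)) (F - 1)).
    { assert (H := is_series_shift_R _ _ HF). simpl in H. rewrite A_0 in H.
      replace (F - 1 * 1) with (F - 1) in H by ring. exact H. }
    assert (HY1 : is_series (fun k => alc (c - a - b) (S k) * w ^ (S k)) (Y - 1)).
    { assert (H := is_series_shift_R _ _ HY). simpl in H. unfold alc at 2 in H. simpl in H.
      replace (Y - 1 / 1 * 1) with (Y - 1) in H by field. exact H. }
    assert (HZ1 := alc_shift_series (c - a - b) Hs).
    set (E := fun k => Acoef a b c (S k) + tau * alc (c - a - b) (S k)).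
    assert (HE : is_series E 0).
    { eapply is_series_ext_R; [| |exact (is_series_plus_R _ _ _ _ HA1 (is_series_scal_R tau _ _ HZ1))].
      intros; reflexivity. unfold tau; ring. }
    assert (HEr : forall k, E k = (- alc (c - a - b) (S k)) * (rho a b c k - tau)).
    { intros k. unfold E. rewrite A_rho by auto. ring. }
    assert (Hex : exists k, E k > 0).
    { apply NNPP. intros Hno.
      assert (Hle : forall k, E k <= 0).
      { intros k. apply Rnot_lt_le. intros Hk. apply Hno. exists k. auto. }
      assert (Hz : forall k, E k = 0).
      { intros k. destruct (Rle_lt_or_eq_dec _ _ (Hle k)) as [Hlt|Heq]; auto. exfalso.
        assert (H := series_pos (fun n => -1 * E n) _ k (is_series_scal_R (-1) _ _ HE)
                      (fun n => ltac:(specialize (Hle n); lra)) ltac:(lra)). lra. }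
      assert (H0 := Hz 0%nat). assert (H1 := Hz 1%nat). rewrite HEr in H0, H1.
      assert (N0 := Hneg 0%nat). assert (N1 := Hneg 1%nat).
      assert (R0 : rho a b c 0 = tau) by (apply Rmult_integral in H0; destruct H0; lra).
      assert (R1 : rho a b c 1 = tau) by (apply Rmult_integral in H1; destruct H1; lra).
      assert (I := rho_incr a b c 0 Ha Hb Hc1 Hc2). lra. }
    destruct (least_nat (fun k => E k > 0) Hex) as [m [Hm Hmin]].
    assert (HD : is_series (fun k => E k * (w ^ m - w ^ (S k))) (P - F - tau * Y)).
    { assert (H1 := is_series_plus_R _ _ _ _ HA1 (is_series_scal_R (-1) _ _ HF1)).
      assert (H2 := is_series_plus_R _ _ _ _ H1 (is_series_scal_R tau _ _ HZ1)).
      assert (H3 := is_series_plus_R _ _ _ _ H2 (is_series_scal_R (- tau) _ _ HY1)).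
      assert (H4 := is_series_plus_R _ _ _ _ H3 (is_series_scal_R (- (1 - w ^ m)) _ _ HE)).
      eapply is_series_ext_R; [| |exact H4].
      - intros k. unfold E. ring.
      - unfold tau. ring. }
    assert (Hpos : 0 < P - F - tau * Y).
    { apply (series_pos _ _ m HD).
      - intros k. destruct (Nat.lt_ge_cases k m) as [Hk|Hk].
        + assert (E k <= 0) by (apply Rnot_lt_le; apply Hmin; auto).
          assert (w ^ m <= w ^ (S k)) by (apply pow_anti; lia || lra).
          nra.
        + assert (Ek : E k > 0).
          { rewrite HEr. rewrite HEr in Hm.
            assert (rho a b c m <= rho a b c k) by (apply rho_mono; auto).
            assert (N := Hneg k). assert (Nm := Hneg m).
            assert (rho a b c m - tau > 0) by (apply Rmult_gt_0_lt_0_compat_inv_l with (- alc (c - a - b) (S m)) || nra).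
            nra. }
          assert (w ^ (S k) < w ^ m) by (apply pow_anti_strict; lia || lra).
          nra.
      - assert (w ^ (S m) < w ^ m) by (apply pow_anti_strict; lia || lra).
        nra. }
    apply Rmult_lt_reg_r with Y; auto.
    unfold Rdiv. rewrite Rmult_assoc, Rinv_l, Rmult_1_r by lra.
    fold tau. lra.
  -
    assert (H1 := is_series_plus_R _ _ _ _ (is_series_scal_R Q _ _ HY) (is_series_scal_R (- Q) _ _ HZ)).
    assert (H2 := is_series_plus_R _ _ _ _ H1 (is_series_scal_R (-1) _ _ HP)).
    assert (H3 := is_series_plus_R _ _ _ _ H2 HF).
    assert (HT : is_series (fun n => (1 - w ^ n) * (- (Q * alc (c - a - b) n) - Acoef a b c n)) (Q * Y - (P - F))).
    { eapply is_series_ext_R; [| |exact H3]. intros n. cbv beta. ring. ring. }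
    assert (Hpos : 0 < Q * Y - (P - F)).
    { apply (series_pos _ _ 1 HT).
      - intros [|k]. simpl. lra.
        assert (w ^ (S k) < w ^ 0) by (apply pow_anti_strict; lia || lra). simpl pow at 2 in H.
        assert (HH := HAQ k). left. apply Rmult_lt_0_compat; lra.
      - assert (w ^ 1 < w ^ 0) by (apply pow_anti_strict; lia || lra). simpl pow at 2 in H.
        assert (HH := HAQ 0%nat). apply Rmult_lt_0_compat; lra. }
    apply Rmult_lt_reg_r with Y; auto.
    unfold Rdiv. rewrite Rmult_assoc, Rinv_l, Rmult_1_r by lra. lra.
Qed.
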